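(* Let $K=\mathfrak{b}(m,n)$ be a 2-bridge knot with associated Riley polynomial $\Phi(x,u)\in\mathbb{Z}[x,u]$, let $k$ be an algebraically closed field whose characteristic does not divide the discriminant of $\Phi(2,u)\in\mathbb{Z}[u]$, and let $\mathcal{O}$ be a complete discrete valuation ring with residue field $k$. Then for any root $\beta\in k$ of $\Phi(2,u)=0$ there is a unique power series $u(x)\in\mathcal{O}[[x-2]]^{\times}$ such that $\beta=u(2)\bmod\mathfrak{m}_{\mathcal{O}}$ and $\Phi(x,u(x))=0$ in $\mathcal{O}[[x-2]]$.
   Context: $K=\mathfrak{b}(m,n)$ is the 2-bridge knot in Schubert form, $m,n$ odd integers with $m>0$, $-m<n<m$, $\gcd(m,n)=1$. Set $\epsilon_i=(-1)^{\lfloor in/m\rfloor}$. For a unit $\alpha$ and an element $\beta$ of a commutative ring, let $C(\alpha)=\begin{pmatrix}\alpha&1\\0&\alpha^{-1}\end{pmatrix}$, $D(\alpha,\beta)=\begin{pmatrix}\alpha&0\\\beta&\alpha^{-1}\end{pmatrix}$, and $W(\alpha,\beta)=C(\alpha)^{\epsilon_1}D(\alpha,\beta)^{\epsilon_2}\cdots C(\alpha)^{\epsilon_{m-2}}D(\alpha,\beta)^{\epsilon_{m-1}}$; there are Laurent polynomials $w_{ij}(t,u)\in\mathbb{Z}[t^{\pm1},u]$ with $W(\alpha,\beta)=(w_{ij}(\alpha,\beta))$. Put $\varphi(t,u)=w_{11}(t,u)+(t^{-1}-t)w_{12}(t,u)$. The Riley polynomial $\Phi(x,u)\in\mathbb{Z}[x,u]$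 is the unique polynomial with $\Phi(t+t^{-1},u)=t^{l}\varphi(t,u)$ for some integer $l$. *)

(* Defs.v *)
From HB Require Import structures.
From mathcomp Require Import all_boot all_order all_algebra.
Set Implicit Arguments. Unset Strict Implicit. Unset Printing Implicit Defensive.
Import Order.TTheory GRing.Theory Num.Theory.
Local Open Scope ring_scope.

Definition schubert_params (m : nat) (n : int) : Prop :=
  [/\ odd m, (0 < m)%N, odd (absz n), - (m%:Z) < n < m%:Z & coprimez m%:Z n].

(* epsilon_i = (-1)^(floor(i n / m)); for m > 0, divz is floor division. *)
Definition riley_eps (m : nat) (n : int) (i : nat) : bool :=
  (* true means epsilon_i = -1 *)
  odd (absz ((i%:Z * n) %/ m%:Z)%Z).

(* Z[t,u] = {poly {poly int}} with outer variable u and inner variable t;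
   Z[t^{+-1},u] embeds into the field of fractions LF. *)
Definition LF := {fraction {poly {poly int}}}.
Definition LF_t : LF := tofrac ('X%:P).
Definition LF_u : LF := tofrac 'X.

Definition Cmx (a : LF) : 'M[LF]_2 := \matrix_(i < 2, j < 2)
  (if (val i == 0%N) && (val j == 0%N) then a
   else if (val i == 0%N) then 1
   else if (val j == 0%N) then 0 else a^-1).
Definition Dmx (a b : LF) : 'M[LF]_2 := \matrix_(i < 2, j < 2)
  (if (val i == 0%N) && (val j == 0%N) then a
   else if (val i == 0%N) then 0
   else if (val j == 0%N) then b else a^-1).

Definition mxpow_eps (e : bool) (M : 'M[LF]_2) : 'M[LF]_2 :=
  if e then invmx M else M.

Definition riley_W (m : nat) (n : int) : 'M[LF]_2 :=
  \prod_(i < m.-1)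
     mxpow_eps (riley_eps m n i.+1)
       (if odd i.+1 then Cmx LF_t else Dmx LF_t LF_u).

Definition riley_phi (m : nat) (n : int) : LF :=
  riley_W m n 0 0 + (LF_t^-1 - LF_t) * riley_W m n 0 1.

(* Evaluation of P(x,u) in Z[x,u] (outer variable u, inner variable x)
   at x := x0, u := u0 in a commutative ring. *)
Definition eval2 (R : comNzRingType) (P : {poly {poly int}}) (x0 u0 : R) : R :=
  (map_poly (fun c : {poly int} => (map_poly intr c).[x0]) P).[u0].

Definition is_riley_poly (m : nat) (n : int) (Phi : {poly {poly int}}) : Prop :=
  exists l : int, eval2 Phi (LF_t + LF_t^-1) LF_u = LF_t ^ l * riley_phi m n.

Definition riley_at2 (Phi : {poly {poly int}}) : {poly int} :=
  map_poly (fun c : {poly int} => c.[2]) Phi.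

Definition discr (f : {poly int}) : int :=
  let d := (size f).-1 in
  (-1) ^+ ((d * d.-1) %/ 2) * ((resultant f f^`()) %/ lead_coef f)%Z.

Definition rdvd (R : comNzRingType) (a b : R) : Prop := exists c, b = a * c.

Definition is_uniformizer (O : idomainType) (p0 : O) : Prop :=
  [/\ p0 != 0, p0 \notin GRing.unit &
      forall x : O, x != 0 -> exists (e : nat) (v : O),
        v \is a GRing.unit /\ x = v * p0 ^+ e].

Definition madic_complete (O : idomainType) (p0 : O) : Prop :=
  forall a : nat -> O,
    (forall N : nat, exists M : nat, forall i j : nat, (M <= i)%N -> (M <= j)%N ->
        rdvd (p0 ^+ N) (a i - a j)) ->
    exists l : O, forall N : nat, exists M : nat, forall i : nat, (M <= i)%N ->
        rdvd (p0 ^+ N) (a i - l).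

(* O is a complete DVR whose residue field is identified with k via the
   surjective ring morphism res : O -> k with kernel the maximal ideal. *)
Definition complete_dvr_residue (O : idomainType) (k : fieldType)
    (res : {rmorphism O -> k}) : Prop :=
  exists p0 : O, [/\ is_uniformizer p0, madic_complete p0,
    (forall y : k, exists x : O, res x = y) &
    (forall x : O, res x = 0 <-> rdvd p0 x)].

Definition pser (R : Type) := nat -> R.

Definition ps_add (R : comNzRingType) (a b : pser R) : pser R := fun i => a i + b i.
Definition ps_mul (R : comNzRingType) (a b : pser R) : pser R :=
  fun i => \sum_(j < i.+1) a j * b (i - j)%N.
Definition ps_one (R : comNzRingType) : pser R := fun i => if i == 0%N then 1 else 0.
Definition ps_zero (R : comNzRingType) : pser R := fun _ => 0.
Definition ps_of_poly (R : comNzRingType) (p : {poly R}) : pser R := fun i => p`_i.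

Definition ps_unit (R : comNzRingType) (a : pser R) : Prop :=
  exists b : pser R, ps_mul a b = ps_one R.

(* Phi(x, u(x)) as an element of O[[x-2]]: for Phi in Z[x,u]
   (outer variable u), substitute x := 2 + y and u := u(y) (Horner scheme). *)
Definition ps_eval_riley (R : comNzRingType) (Phi : {poly {poly int}})
    (u : pser R) : pser R :=
  foldr (fun (c : {poly int}) (acc : pser R) =>
           ps_add (ps_of_poly (map_poly intr (c \Po ('X + 2%:P)))) (ps_mul acc u))
        (ps_zero R) Phi.

(* Main.v *)
Require Import Defs.
From HB Require Import structures.
From mathcomp Require Import all_boot all_order all_algebra.
From Stdlib Require Import FunctionalExtensionality.
From mathcomp Require Import ring zify.
Set Implicit Arguments. Unset Strict Implicit. Unset Printing Implicit Defensive.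
Import Order.TTheory GRing.Theory Num.Theory.
Local Open Scope ring_scope.

Section Abstract.
Variable O : idomainType.

Definition upd (u : pser O) (n : nat) (d : O) : pser O :=
  fun i => if i == n then u n + d else u i.

Definition causal (Ev : pser O -> pser O) :=
  forall u v j, (forall l, (l <= j)%N -> u l = v l) -> Ev u j = Ev v j.

Definition stepP (Ev : pser O -> pser O) (a0 c : O) :=
  forall u n d, (0 < n)%N -> u 0%N = a0 -> Ev (upd u n d) n = Ev u n + d * c.

Definition cst0 (a0 : O) : pser O := fun i => if i == 0%N then a0 else 0.

Lemma hensel_exists Ev a0 c ci : causal Ev -> stepP Ev a0 c -> ci * c = 1 ->
  Ev (cst0 a0) 0%N = 0 ->
  exists u : pser O, u 0%N = a0 /\ forall i, Ev u i = 0.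
Proof.
move=> Hc Hs Hci H0.
pose U := fix U n := if n is n'.+1 then upd (U n') n (- (Ev (U n') n * ci)) else cst0 a0.
have U0 n : U n 0%N = a0 by elim: n => [|n IH] //=; rewrite /upd.
have Hz n : forall j, (j <= n)%N -> Ev (U n) j = 0.
  elim: n => [|n IH] j hj.
    by move: hj; rewrite leqn0 => /eqP->.
  rewrite leq_eqVlt in hj; case/orP: hj => [/eqP->|hj].
    rewrite /= Hs // ?U0 // mulNr -mulrA Hci mulr1 subrr //.
  rewrite /= -(IH j) //; apply: Hc => l hl; rewrite /upd.
  by rewrite ifN // neq_ltn ltnS (leq_trans hl hj).
have Hag n l : (l <= n)%N -> U n l = U l l.
  elim: n => [|n IH] hl; first by move: hl; rewrite leqn0 => /eqP->.
  rewrite leq_eqVlt in hl; case/orP: hl => [/eqP->//|hl].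
  by rewrite /= /upd ifN ?IH // neq_ltn hl.
exists (fun i => U i i); split; first exact: U0.
move=> i; rewrite -(Hz i i) //; apply: Hc => l hl; exact/esym/Hag.
Qed.

Lemma hensel_unique Ev a0 c u v : causal Ev -> stepP Ev a0 c -> c != 0 ->
  u 0%N = a0 -> v 0%N = a0 -> (forall i, Ev u i = 0) -> (forall i, Ev v i = 0) ->
  u = v.
Proof.
move=> Hc Hs c0 hu hv Eu Ev0.
suff H : forall i, forall l, (l <= i)%N -> u l = v l.
  by apply: functional_extensionality_dep => i; exact: H (leqnn i).
elim=> [|i IH] l hl.
  by move: hl; rewrite leqn0 => /eqP->; rewrite hu hv.
rewrite leq_eqVlt in hl; case/orP: hl => [/eqP->|hl]; last exact: IH.
pose d := v i.+1 - u i.+1.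
have E1 : Ev v i.+1 = Ev (upd u i.+1 d) i.+1.
  apply: Hc => j hj; rewrite /upd.
  case: eqP => [->|/eqP hj']; first by rewrite /d addrC subrK.
  by apply/esym/IH; rewrite -ltnS ltn_neqAle hj' hj.
move: E1; rewrite Hs ?hu // Ev0 Eu add0r => /esym/eqP; rewrite mulf_eq0 (negPf c0) orbF.
by rewrite /d subr_eq0 => /eqP.
Qed.
End Abstract.

Lemma taylor1 (S : comNzRingType) (P : {poly S}) x h :
  exists r, P.[x + h] = P.[x] + h * P^`().[x] + h ^+ 2 * r.
Proof.
elim/poly_ind: P => [|P c [r Hr]].
  by exists 0; rewrite deriv0 !horner0 !mulr0 !addr0.
exists (r * (x + h) + P^`().[x]).
rewrite derivMXaddC !(hornerE, hornerD, hornerM, hornerX, hornerC) Hr; ring.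
Qed.

Section PS.
Variable O : idomainType.

Definition gq (c : {poly int}) : {poly O} := map_poly intr (c \Po ('X + 2%:P)).
Definition trn (u : pser O) (i : nat) : {poly O} := \poly_(j < i.+1) u j.
Definition approx (a : pser O) (i : nat) (p : {poly O}) :=
  forall j, (j <= i)%N -> a j = p`_j.

Lemma approx_add a b p q i : approx a i p -> approx b i q ->
  approx (ps_add a b) i (p + q).
Proof. by move=> ha hb j hj; rewrite /ps_add coefD ha ?hb. Qed.

Lemma approx_mul a b p q i : approx a i p -> approx b i q ->
  approx (ps_mul a b) i (p * q).
Proof.
move=> ha hb j hj; rewrite /ps_mul coefM; apply: eq_bigr => l _.
have hl : (l <= j)%N by rewrite -ltnS.
rewrite ha ?hb //; first exact: leq_trans (leq_subr _ _) hj.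
exact: leq_trans hl hj.
Qed.

Lemma approx_trn u i : approx u i (trn u i).
Proof. by move=> j hj; rewrite coef_poly ltnS hj. Qed.

Lemma approx_poly p i : approx (ps_of_poly p) i p.
Proof. by []. Qed.

Lemma eval_approx (Phi : {poly {poly int}}) u i :
  approx (ps_eval_riley Phi u) i (Poly (map gq Phi)).[trn u i].
Proof.
rewrite /ps_eval_riley; elim: (polyseq Phi) => [|c s IH] /=.
  by move=> j _; rewrite horner0 coef0.
rewrite horner_cons [X in approx _ _ X]addrC; apply: approx_add => //; apply: approx_mul => //.
exact: approx_trn.
Qed.

Lemma evalE (Phi : {poly {poly int}}) u i :
  ps_eval_riley Phi u i = ((Poly (map gq Phi)).[trn u i])`_i.
Proof. exact: eval_approx. Qed.
End PS.

Section PS2.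
Variable O : idomainType.
Variable Phi : {poly {poly int}}.
Let PS : {poly {poly O}} := Poly (map (@gq O) Phi).
Let fO : {poly O} := map_poly intr (riley_at2 Phi).

Lemma coef0_eval (P : {poly {poly O}}) Z :
  (P.[Z])`_0 = (map_poly (coefp 0) P).[Z`_0].
Proof. by rewrite -[Z`_0]/(coefp 0 Z) horner_map. Qed.

Lemma map_coef0_PS : map_poly (coefp 0) PS = fO.
Proof.
apply/polyP => j; rewrite /PS -map_polyE coef_map coef_map_id0; last first.
  by rewrite /gq comp_poly0 map_poly0.
rewrite /fO coef_map /riley_at2 coef_map_id0 ?horner0 //=.
by rewrite /gq coef_map /= -horner_coef0 horner_comp !hornerE.
Qed.

Lemma map_coef0_PS' : map_poly (coefp 0) PS^`() = fO^`().
Proof. by rewrite -deriv_map map_coef0_PS. Qed.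

Lemma ev_causal : causal (ps_eval_riley (R:=O) Phi).
Proof.
move=> u v j H; rewrite !evalE.
suff -> : trn u j = trn v j by [].
by apply/polyP => l; rewrite !coef_poly; case: ifP => // hl; apply: H.
Qed.

Lemma ev_base a0 : ps_eval_riley Phi (cst0 a0) 0%N = fO.[a0].
Proof.
by rewrite evalE coef0_eval -/PS map_coef0_PS coef_poly.
Qed.

Lemma ev_zero v : ps_eval_riley Phi v 0%N = fO.[v 0%N].
Proof.
by rewrite evalE coef0_eval -/PS map_coef0_PS coef_poly.
Qed.

Lemma ev_step a0 : stepP (ps_eval_riley (R:=O) Phi) a0 fO^`().[a0].
Proof.
move=> u n d n0 u0; rewrite !evalE.
have -> : trn (upd u n d) n = trn u n + d *: 'X^n.
  apply/polyP => l; rewrite coefD coefZ coefXn !coef_poly /upd.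
  case: (eqVneq l n) => [->|hn]; rewrite ?ltnSn ?eqxx.
    by rewrite mulr1.
  by rewrite mulr0 addr0.
have [r ->] := taylor1 (Poly (map (@gq O) Phi)) (trn u n) (d *: 'X^n).
rewrite !coefD -scalerAl coefZ coefXnM ltnn subnn exprZn -scalerAl coefZ.
rewrite -exprM coefXnM ifT; last by rewrite -{1}(muln1 n) ltn_pmul2l.
rewrite mulr0 addr0 coef0_eval -/PS map_coef0_PS' coef_poly /= u0.
by rewrite mulrC.
Qed.
End PS2.

Section Dvd.
Variable R : comNzRingType.
Implicit Types a x y : R.
Lemma rdvd_refl a : rdvd a a. Proof. by exists 1; rewrite mulr1. Qed.
Lemma rdvd0 a : rdvd a 0. Proof. by exists 0; rewrite mulr0. Qed.
Lemma rdvdD a x y : rdvd a x -> rdvd a y -> rdvd a (x + y).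
Proof. by move=> [b ->] [c ->]; exists (b + c); rewrite mulrDr. Qed.
Lemma rdvdN a x : rdvd a x -> rdvd a (- x).
Proof. by move=> [b ->]; exists (- b); rewrite mulrN. Qed.
Lemma rdvdB a x y : rdvd a x -> rdvd a y -> rdvd a (x - y).
Proof. by move=> h1 h2; apply: rdvdD => //; apply: rdvdN. Qed.
Lemma rdvdMr a x y : rdvd a x -> rdvd a (x * y).
Proof. by move=> [b ->]; exists (b * y); rewrite mulrA. Qed.
Lemma rdvdMl a x y : rdvd a y -> rdvd a (x * y).
Proof. by rewrite mulrC; apply: rdvdMr. Qed.
Lemma rdvd_trans a b x : rdvd a b -> rdvd b x -> rdvd a x.
Proof. by move=> [c ->] [d ->]; exists (c * d); rewrite mulrA. Qed.
Lemma rdvd_exp a (N M : nat) : (N <= M)%N -> rdvd (a ^+ N) (a ^+ M).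
Proof. by move=> h; exists (a ^+ (M - N)); rewrite -exprD subnKC. Qed.
Lemma rdvdM a b x y : rdvd a x -> rdvd b y -> rdvd (a * b) (x * y).
Proof. by move=> [c ->] [d ->]; exists (c * d); ring. Qed.
End Dvd.

Section DVR.
Variables (O : idomainType) (k : fieldType) (res : {rmorphism O -> k}) (p0 : O).
Hypothesis Hu : is_uniformizer p0.
Hypothesis Hker : forall x : O, res x = 0 <-> rdvd p0 x.

Lemma res_unit x : res x != 0 -> x \is a GRing.unit.
Proof.
move=> hx; have x0 : x != 0 by apply: contraNneq hx => ->; rewrite rmorph0.
case: Hu => _ _ /(_ x x0) [e [v [hv hxe]]].
rewrite hxe in hx *.
case: e hxe hx => [|e] hxe hx; first by rewrite expr0 mulr1.
have h0 : res (v * p0 ^+ e.+1) = 0 by apply/Hker; exists (v * p0 ^+ e); rewrite exprS; ring.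
by rewrite h0 eqxx in hx.
Qed.

Lemma all_pow_zero x : (forall N, rdvd (p0 ^+ N) x) -> x = 0.
Proof.
move=> H; apply/eqP/negP => /negP x0.
case: Hu => p00 pnu /(_ x x0) [e [v [hv hx]]].
have [c hc] := H e.+1.
have pe : p0 ^+ e != 0 by rewrite expf_neq0.
have : (v - c * p0) * p0 ^+ e = 0.
  by rewrite mulrBl -hx hc exprS; ring.
move/eqP; rewrite mulf_eq0 (negPf pe) orbF subr_eq0 => /eqP hvc.
by move: hv; rewrite hvc unitrM (negPf pnu) andbF.
Qed.

Lemma hensel_O (f : {poly O}) x0 : madic_complete p0 ->
  res (f.[x0]) = 0 -> res (f^`().[x0]) != 0 ->
  exists a, f.[a] = 0 /\ res a = res x0.
Proof.
move=> Hc hf hd.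
set c := f^`().[x0]; have cu : c \is a GRing.unit by apply: res_unit.
set e := c^-1.
pose X := fix X n := if n is n'.+1 then X n' - f.[X n'] * e else x0.
have Inv n : rdvd p0 (X n - x0) /\ rdvd (p0 ^+ n.+1) (f.[X n]).
  elim: n => [|n [[b hb] [a ha]]] /=.
    by rewrite subrr expr1; split; [apply: rdvd0 | apply/Hker].
  set y := X n in hb ha *.
  split.
    rewrite addrAC hb; apply: rdvdB; first by exists b.
    by exists (p0 ^+ n * a * e); rewrite ha exprS; ring.
  have [r ->] := taylor1 f y (- (f.[y] * e)).
  have [s hs] := taylor1 f^`() x0 (y - x0).
  rewrite addrC subrK in hs; rewrite hs -/c hb ha.
  have ce : c * e = 1 by rewrite /e mulrV.
  have -> : p0 ^+ n.+1 * a + - (p0 ^+ n.+1 * a * e) * (c + p0 * b * (f^`()^`()).[x0] + (p0 * b) ^+ 2 * s) +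
     (- (p0 ^+ n.+1 * a * e)) ^+ 2 * r =
     p0 ^+ n.+1 * a * (1 - c * e) - p0 ^+ n.+2 * (a * e * (b * (f^`()^`()).[x0] + p0 * b ^+ 2 * s)) +
     p0 ^+ n.+2 * (p0 ^+ n * a ^+ 2 * e ^+ 2 * r).
    rewrite !exprS; ring.
  rewrite ce subrr mulr0 add0r.
  by apply: rdvdD; [apply: rdvdN|]; apply: rdvdMr; apply: rdvd_refl.
have Hstep n : rdvd (p0 ^+ n.+1) (X n.+1 - X n).
  by rewrite /= addrAC subrr add0r; apply/rdvdN/rdvdMr; case: (Inv n).
have Htel j d : rdvd (p0 ^+ j.+1) (X (j + d)%N - X j).
  elim: d => [|d IH]; first by rewrite addn0 subrr; apply: rdvd0.
  rewrite addnS -(subrK (X (j + d)%N) (X (j + d).+1)) -addrA; apply: rdvdD => //.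
  apply: rdvd_trans (Hstep _); apply: rdvd_exp; rewrite ltnS leq_addr //.
have [l Hl] : exists l, forall N, exists M, forall i, (M <= i)%N -> rdvd (p0 ^+ N) (X i - l).
  apply: Hc => N; exists N => i j hi hj.
  rewrite -(subnKC hi) -(subnKC hj).
  rewrite -(subrK (X N) (X (N + (i - N))%N)) -(subrK (X N) (X (N + (j - N))%N)).
  rewrite opprD addrACA subrr addr0 -[X in rdvd X _]/(p0 ^+ N).
  by apply: rdvdB; apply: rdvd_trans (Htel _ _); apply: rdvd_exp.
exists l; split.
  apply: (all_pow_zero (x := f.[l])) => N.
  have [M HM] := Hl N; set i := maxn M N.
  have hi := HM i (leq_maxl _ _).
  have -> : l = X i + (l - X i) by rewrite addrC subrK.
  have [r ->] := taylor1 f (X i) (l - X i).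
  have hN : rdvd (p0 ^+ N) (l - X i) by rewrite -opprB; apply: rdvdN.
  apply: rdvdD; [apply: rdvdD|].
  - apply: rdvd_trans (proj2 (Inv i)); apply: rdvd_exp; exact: leq_trans (leq_maxr _ _) (leqnSn _).
  - exact: rdvdMr.
  - by rewrite expr2 -mulrA; apply: rdvdMr.
have [M HM] := Hl 1%N.
have h1 := HM M (leqnn _); have h2 := proj1 (Inv M).
have : res (x0 - l) = 0.
  apply/Hker; rewrite -(subrK (X M) x0) -addrA.
  rewrite expr1 in h1; apply: rdvdD => //; rewrite -opprB; exact: rdvdN.
by rewrite rmorphB => /eqP; rewrite subr_eq0 => /eqP.
Qed.
End DVR.

Definition mk2 (R : Type) (a b c d : R) : 'M[R]_2 := \matrix_(i < 2, j < 2)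
  (if val i == 0%N then (if val j == 0%N then a else b)
   else (if val j == 0%N then c else d)).

Lemma ord2_cases (i : 'I_2) : i = 0 \/ i = 1.
Proof. by case: i => [[|[|i]] hi]; [left; apply: val_inj|right; apply: val_inj|]. Qed.

Lemma mx2_eq (R : Type) (A B : 'M[R]_2) :
  A 0 0 = B 0 0 -> A 0 1 = B 0 1 -> A 1 0 = B 1 0 -> A 1 1 = B 1 1 -> A = B.
Proof.
move=> h1 h2 h3 h4; apply/matrixP => i j.
by case: (ord2_cases i) => ->; case: (ord2_cases j) => ->.
Qed.

Lemma mulmx2E (R : pzSemiRingType) (A B : 'M[R]_2) i j :
  (A *m B) i j = A i 0 * B 0 j + A i 1 * B 1 j.
Proof.
have e0 : (ord0 : 'I_2) = 0 by apply: val_inj.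
have e1 : lift ord0 ord0 = (1 : 'I_2) by apply: val_inj.
by rewrite mxE !big_ord_recl big_ord0 addr0 e0 e1.
Qed.

Lemma mk2_mul (R : pzSemiRingType) (a b c d a' b' c' d' : R) :
  mk2 a b c d *m mk2 a' b' c' d' =
  mk2 (a * a' + b * c') (a * b' + b * d') (c * a' + d * c') (c * b' + d * d').
Proof. by apply: mx2_eq; rewrite mulmx2E !mxE. Qed.

Lemma mk2_one (R : pzSemiRingType) : mk2 (1 : R) 0 0 1 = 1%:M.
Proof. apply: mx2_eq; rewrite !mxE /=; reflexivity. Qed.

Lemma map_mk2 (aR rR : pzSemiRingType) (f : aR -> rR) a b c d :
  map_mx f (mk2 a b c d) = mk2 (f a) (f b) (f c) (f d).
Proof. apply: mx2_eq; rewrite !mxE /=; reflexivity. Qed.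

Lemma scale_mk2 (R : pzRingType) (x a b c d : R) :
  x *: mk2 a b c d = mk2 (x * a) (x * b) (x * c) (x * d).
Proof. apply: mx2_eq; rewrite !mxE /=; reflexivity. Qed.

Lemma invmx_eq (R : comUnitRingType) (A B : 'M[R]_2) : A *m B = 1%:M -> invmx A = B.
Proof.
move=> h; have [Au _] := mulmx1_unit h.
by rewrite -[RHS](mulKmx Au) h mulmx1.
Qed.

Notation R2 := {poly {poly int}}.
Definition T (p : R2) : LF := tofrac p.
Definition tt : R2 := 'X%:P.
Definition uu : R2 := 'X.

Lemma LF_t_neq0 : LF_t != 0.
Proof. by rewrite /LF_t tofrac_eq0 polyC_eq0 polyX_eq0. Qed.

Lemma T_tt : T tt = LF_t. Proof. by []. Qed.
Lemma T_N x : T (- x) = - T x. Proof. exact: tofracN. Qed.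
Lemma T_M x y : T (x * y) = T x * T y. Proof. exact: tofracM. Qed.
Lemma T_D x y : T (x + y) = T x + T y. Proof. exact: tofracD. Qed.
Lemma T_X x n : T (x ^+ n) = T x ^+ n. Proof. exact: tofracXn. Qed.
Lemma T_0 : T 0 = 0. Proof. exact: tofrac0. Qed.
Lemma T_1 : T 1 = 1. Proof. exact: tofrac1. Qed.
Lemma T_uu : T uu = LF_u. Proof. by []. Qed.

Definition Cp (e : bool) : 'M[R2]_2 :=
  if e then mk2 1 (- tt) 0 (tt ^+ 2) else mk2 (tt ^+ 2) tt 0 1.
Definition Dp (e : bool) : 'M[R2]_2 :=
  if e then mk2 1 0 (- (tt * uu)) (tt ^+ 2) else mk2 (tt ^+ 2) 0 (tt * uu) 1.

Lemma Cmx_mk2 a : Cmx a = mk2 a 1 0 a^-1.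
Proof. apply: mx2_eq; rewrite !mxE /=; reflexivity. Qed.
Lemma Dmx_mk2 a b : Dmx a b = mk2 a 0 b a^-1.
Proof. apply: mx2_eq; rewrite !mxE /=; reflexivity. Qed.


Section Gen.
Variables (F : fieldType) (t u : F).
Hypothesis t0 : t != 0.
Lemma C1gen : mk2 t 1 0 t^-1 = t^-1 *: mk2 (t ^+ 2) t 0 1.
Proof. by rewrite scale_mk2; congr mk2; field. Qed.
Lemma C2gen : invmx (mk2 t 1 0 t^-1) = t^-1 *: mk2 1 (- t) 0 (t ^+ 2).
Proof. by apply: invmx_eq; rewrite scale_mk2 mk2_mul -mk2_one; congr mk2; field. Qed.
Lemma D1gen : mk2 t 0 u t^-1 = t^-1 *: mk2 (t ^+ 2) 0 (t * u) 1.
Proof. by rewrite scale_mk2; congr mk2; field. Qed.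
Lemma D2gen : invmx (mk2 t 0 u t^-1) = t^-1 *: mk2 1 0 (- (t * u)) (t ^+ 2).
Proof. by apply: invmx_eq; rewrite scale_mk2 mk2_mul -mk2_one; congr mk2; field. Qed.
End Gen.

Lemma map_Cp e : map_mx T (Cp e) =
  if e then mk2 1 (- LF_t) 0 (LF_t ^+ 2) else mk2 (LF_t ^+ 2) LF_t 0 1.
Proof.
case: e; rewrite /Cp map_mk2.
  by rewrite T_1 T_N T_tt T_0 T_X T_tt.
by rewrite T_1 T_tt T_0 T_X T_tt.
Qed.

Lemma map_Dp e : map_mx T (Dp e) =
  if e then mk2 1 0 (- (LF_t * LF_u)) (LF_t ^+ 2) else mk2 (LF_t ^+ 2) 0 (LF_t * LF_u) 1.
Proof.
case: e; rewrite /Dp map_mk2.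
  by rewrite T_1 T_0 T_N T_M T_tt T_uu T_X T_tt.
by rewrite T_1 T_0 T_M T_tt T_uu T_X T_tt.
Qed.

Lemma Cmx_eps e : mxpow_eps e (Cmx LF_t) = LF_t^-1 *: map_mx T (Cp e).
Proof.
rewrite /mxpow_eps Cmx_mk2 map_Cp; case: e.
  exact: C2gen LF_t_neq0.
exact: C1gen LF_t_neq0.
Qed.

Lemma Dmx_eps e : mxpow_eps e (Dmx LF_t LF_u) = LF_t^-1 *: map_mx T (Dp e).
Proof.
rewrite /mxpow_eps Dmx_mk2 map_Dp; case: e.
  exact: D2gen LF_t_neq0.
exact: D1gen LF_t_neq0.
Qed.

Lemma map_mx_prod (aR rR : comNzRingType) (f : {rmorphism aR -> rR}) N (G : nat -> 'M[aR]_2) :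
  map_mx f (\prod_(i < N) G i) = \prod_(i < N) map_mx f (G i).
Proof.
elim: N => [|N IH]; first by rewrite !big_ord0 map_mx1.
by rewrite !big_ord_recr /= -IH -!mulmxE map_mxM.
Qed.

Lemma prod_scale N (G : nat -> 'M[R2]_2) :
  \prod_(i < N) (LF_t^-1 *: map_mx T (G i)) = LF_t^-1 ^+ N *: map_mx T (\prod_(i < N) G i).
Proof.
elim: N => [|N IH]; first by rewrite !big_ord0 expr0 scale1r /T map_mx1.
rewrite !big_ord_recr /= IH -scalerAl -scalerAr scalerA -exprSr.
by rewrite /T -!mulmxE map_mxM.
Qed.

Definition Pm (e c : bool) : 'M[R2]_2 := if c then Cp e else Dp e.
Definition Wp (m : nat) (n : int) : 'M[R2]_2 :=
  \prod_(i < m.-1) Pm (riley_eps m n i.+1) (odd i.+1).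

Lemma riley_W_eq m n : riley_W m n = LF_t^-1 ^+ m.-1 *: map_mx T (Wp m n).
Proof.
rewrite /riley_W /Wp -(prod_scale m.-1 (fun i => Pm (riley_eps m n i.+1) (odd i.+1))); apply: eq_bigr => i _.
by rewrite /Pm; case: (odd i.+1); rewrite ?Cmx_eps ?Dmx_eps.
Qed.

Lemma phi_gen (F : fieldType) (t A B : F) (m : nat) : t != 0 -> (0 < m)%N ->
  t ^+ m * (t^-1 ^+ m.-1 * A + (t^-1 - t) * (t^-1 ^+ m.-1 * B)) = t * A + (1 - t ^+ 2) * B.
Proof.
move=> t0; case: m => // m _ /=; rewrite exprVn exprS.
have tm : t ^+ m != 0 by rewrite expf_neq0.
by field; rewrite tm t0.
Qed.

Definition Nr (m : nat) (n : int) : R2 :=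
  tt * Wp m n 0 0 + (1 - tt ^+ 2) * Wp m n 0 1.

Lemma riley_phi_eq m n : (0 < m)%N -> LF_t ^+ m * riley_phi m n = T (Nr m n).
Proof.
move=> m0; rewrite /riley_phi riley_W_eq !mxE phi_gen //; last exact: LF_t_neq0.
by rewrite /Nr T_D !T_M T_tt T_D T_1 T_N T_X T_tt.
Qed.

Definition jota (q : {poly int}) : LF := T q%:P.
Lemma jotaD a b : jota (a + b) = jota a + jota b.
Proof. by rewrite /jota polyCD T_D. Qed.
Lemma jotaM a b : jota (a * b) = jota a * jota b.
Proof. by rewrite /jota polyCM T_M. Qed.
Lemma jotaX a n : jota (a ^+ n) = jota a ^+ n.
Proof. by rewrite /jota rmorphXn T_X. Qed.
Lemma jota1 : jota 1 = 1. Proof. by rewrite /jota polyC1 T_1. Qed.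
Lemma jota0 : jota 0 = 0. Proof. by rewrite /jota polyC0 T_0. Qed.
Lemma jotaXX : jota 'X = LF_t. Proof. by []. Qed.
Lemma jota_sum N (F : 'I_N -> {poly int}) : jota (\sum_(i < N) F i) = \sum_(i < N) jota (F i).
Proof.
elim: N F => [|N IH] F; first by rewrite !big_ord0 jota0.
by rewrite !big_ord_recr /= jotaD IH.
Qed.
Lemma jotaC (c : int) : jota c%:P = c%:~R.
Proof.
rewrite /jota /T.
have -> : (c%:P)%:P = c%:~R :> R2 by rewrite -[c in LHS]intz !rmorph_int.
by rewrite rmorph_int.
Qed.

Definition homz (D : nat) (c : {poly int}) : {poly int} :=
  \sum_(i < size c) c`_i *: (('X ^+ 2 + 1) ^+ i * 'X ^+ (D - i)).

Lemma homz_gen (F : fieldType) (t x : F) (D i : nat) : t != 0 -> (i <= D)%N ->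
  t ^+ D * (x * (t + t^-1) ^+ i) = x * ((t ^+ 2 + 1) ^+ i * t ^+ (D - i)).
Proof.
move=> t0 hi; rewrite -{1}(subnKC hi) exprD.
have -> : t ^+ 2 + 1 = t * (t + t^-1) by field.
rewrite exprMn; ring.
Qed.

Lemma homz_eval D (c : {poly int}) : (size c <= D.+1)%N ->
  jota (homz D c) = LF_t ^+ D * (map_poly intr c).[LF_t + LF_t^-1].
Proof.
move=> hs; rewrite (@horner_coef_wide _ (size c)); last exact: size_poly.
rewrite mulr_sumr /homz jota_sum; apply: eq_bigr => i _.
rewrite coef_map /= -mul_polyC jotaM jotaC jotaM jotaX jotaD jotaX jotaXX jota1 jotaX jotaXX.
rewrite homz_gen //; first exact: LF_t_neq0.
by rewrite -ltnS; apply: leq_trans hs.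
Qed.

Definition ev1 (p : R2) : {poly int} := map_poly (horner_eval (1 : int)) p.

Lemma ev1M a b : ev1 (a * b) = ev1 a * ev1 b. Proof. exact: rmorphM. Qed.
Lemma ev1X a n : ev1 (a ^+ n) = ev1 a ^+ n. Proof. exact: rmorphXn. Qed.
Lemma ev1_tt : ev1 tt = 1.
Proof. by rewrite /ev1 /tt map_polyC /= horner_evalE hornerX. Qed.

Lemma T_sum N (F : 'I_N -> R2) : T (\sum_(i < N) F i) = \sum_(i < N) T (F i).
Proof.
elim: N F => [|N IH] F; first by rewrite !big_ord0 T_0.
by rewrite !big_ord_recr /= T_D IH.
Qed.

Lemma T_horner (p : R2) : T p = (map_poly jota p).[LF_u].
Proof.
rewrite (@horner_coef_wide _ (size p)); last exact: size_poly.
rewrite -{1}(coefK p) poly_def T_sum; apply: eq_bigr => i _.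
by rewrite coef_map_id0 ?jota0 // -mul_polyC T_M T_X T_uu.
Qed.

Lemma conclude (A B : R2) (a : nat) (z : int) :
  T A * LF_t ^+ a = LF_t ^ z * T B -> ev1 A = ev1 B.
Proof.
have t0 := LF_t_neq0.
case: z => b /= h.
  have : T (A * tt ^+ a) = T (tt ^+ b * B) by rewrite !T_M !T_X T_tt.
  move/eqP; rewrite /T tofrac_eq => /eqP /(congr1 ev1).
  by rewrite !ev1M !ev1X ev1_tt !expr1n mulr1 mul1r.
have : T (A * tt ^+ (a + b.+1)) = T B.
  rewrite T_M T_X T_tt exprD mulrA h.
  have -> : LF_t ^ Negz b = (LF_t ^+ b.+1)^-1 by [].
  have tb : LF_t ^+ b.+1 != 0 by rewrite expf_neq0.
  by rewrite mulrAC mulVf // mul1r.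
move/eqP; rewrite /T tofrac_eq => /eqP /(congr1 ev1).
by rewrite !ev1M !ev1X ev1_tt !expr1n mulr1.
Qed.

Definition Inv (j : nat) (p q : {poly int}) :=
  [/\ size p = (j./2).+1, p`_0 = 1 &
     if odd j then size q = (j./2).+1 /\ lead_coef q ^+ 2 = 1
     else lead_coef p ^+ 2 = 1 /\ (size q <= j./2)%N].

Lemma Inv_stepC j p q (a : int) : ~~ odd j -> a ^+ 2 = 1 -> Inv j p q ->
  Inv j.+1 p (p * a%:P + q).
Proof.
move=> ej ha [sp p0 /=]; rewrite (negPf ej) => [[lp sq]].
have a0 : a != 0 by apply: contra_eq_neq ha => ->; rewrite expr0n.
have hs : size (p * a%:P) = size p by rewrite mulrC size_Cmul.
have hl : (size q < size (p * a%:P)%R)%N by rewrite hs sp ltnS.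
split => //=; rewrite ?uphalf_half (negPf ej) add0n //.
split; first by rewrite size_polyDl // hs.
by rewrite lead_coefDl // mulrC mul_polyC lead_coefZ exprMn ha lp mul1r.
Qed.

Lemma Inv_stepD j p q (b : int) : odd j -> b ^+ 2 = 1 -> Inv j p q ->
  Inv j.+1 (p + q * (b%:P * 'X)) q.
Proof.
move=> oj hb [sp p0 /=]; rewrite oj => [[sq lq]].
have b0 : b != 0 by apply: contra_eq_neq hb => ->; rewrite expr0n.
have q0 : q != 0 by rewrite -size_poly_eq0 sq.
have hs : size (q * (b%:P * 'X)) = (size q).+1.
  by rewrite mulrCA size_Cmul // size_mulX.
have hl : (size p < size (q * (b%:P * 'X))%R)%N by rewrite hs sp sq.
have hj : j.+1./2 = (j./2).+1 by rewrite /= uphalf_half oj.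
split; rewrite ?hj /= ?oj /=.
- by rewrite addrC size_polyDl // hs sq.
- by rewrite coefD coef0M coef0M coefX mulr0 mulr0 addr0.
split; last by rewrite sq.
rewrite addrC lead_coefDl // mulrCA mul_polyC lead_coefZ lead_coefMX.
by rewrite exprMn hb lq mul1r.
Qed.

Lemma Inv_prod (Q : nat -> 'M[{poly int}]_2) :
  (forall i, if odd i.+1 then exists a : int, a ^+ 2 = 1 /\ Q i = mk2 1 a%:P 0 1
             else exists b : int, b ^+ 2 = 1 /\ Q i = mk2 1 0 (b%:P * 'X) 1) ->
  forall j, Inv j ((\prod_(i < j) Q i) 0 0) ((\prod_(i < j) Q i) 0 1).
Proof.
move=> HQ; elim=> [|j IH].
  rewrite big_ord0 !mxE /=; split => //; first by rewrite size_poly1.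
    by rewrite coef1.
  by rewrite /= lead_coef1 expr1n size_poly0.
rewrite big_ord_recr /= -mulmxE !mulmx2E.
have := HQ j; case: ifP => hj [c [hc ->]]; rewrite !mxE /=.
  rewrite mulr1 mulr0 addr0 mulr1.
  by apply: Inv_stepC => //; rewrite -oddS hj.
rewrite mulr1 mulr0 add0r mulr1.
by apply: Inv_stepD => //; move: hj; rewrite /= => /negbFE.
Qed.

Lemma ev1_1 : ev1 1 = 1. Proof. exact: rmorph1. Qed.
Lemma ev1_0 : ev1 0 = 0. Proof. exact: rmorph0. Qed.
Lemma ev1N a : ev1 (- a) = - ev1 a. Proof. exact: rmorphN. Qed.
Lemma ev1D a b : ev1 (a + b) = ev1 a + ev1 b. Proof. exact: rmorphD. Qed.
Lemma ev1B a b : ev1 (a - b) = ev1 a - ev1 b. Proof. exact: rmorphB. Qed.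
Lemma ev1_uu : ev1 uu = 'X. Proof. by rewrite /ev1 /uu map_polyX. Qed.

Lemma Q_ok m n i :
  let Q := map_mx ev1 (Pm (riley_eps m n i.+1) (odd i.+1)) in
  if odd i.+1 then exists a : int, a ^+ 2 = 1 /\ Q = mk2 1 a%:P 0 1
  else exists b : int, b ^+ 2 = 1 /\ Q = mk2 1 0 (b%:P * 'X) 1.
Proof.
rewrite /Pm; case: (odd i.+1); case: (riley_eps m n i.+1); rewrite /Cp /Dp map_mk2.
- exists (-1); split; first by rewrite sqrrN expr1n.
  by rewrite ev1_1 ev1N ev1_tt ev1_0 ev1X ev1_tt expr1n polyCN.
- exists 1; split; first by rewrite expr1n.
  by rewrite ev1X ev1_tt ev1_0 ev1_1 expr1n.
- exists (-1); split; first by rewrite sqrrN expr1n.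
  by rewrite ev1_1 ev1N ev1M ev1_tt ev1_uu ev1_0 ev1X ev1_tt expr1n polyCN mul1r mulN1r.
- exists 1; split; first by rewrite expr1n.
  by rewrite ev1X ev1M ev1_tt ev1_uu ev1_0 ev1_1 expr1n mul1r.
Qed.

Lemma homz_at1 (Dn : nat) (c : {poly int}) : (homz Dn c).[1] = c.[2].
Proof.
rewrite /homz horner_sum horner_coef; apply: eq_bigr => i _.
by rewrite hornerZ hornerM horner_exp !hornerXn hornerD hornerXn hornerC !expr1n mulr1.
Qed.

Lemma ev1_mxM (A B : 'M[R2]_2) : map_mx ev1 (A *m B) = map_mx ev1 A *m map_mx ev1 B.
Proof. by apply/matrixP => i j; rewrite [map_mx _ (A *m B) i j]mxE !mulmx2E !mxE ev1D !ev1M. Qed.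

Lemma ev1_prod N (G : nat -> 'M[R2]_2) :
  map_mx ev1 (\prod_(i < N) G i) = \prod_(i < N) map_mx ev1 (G i).
Proof.
elim: N => [|N IH]; first by rewrite !big_ord0; apply/matrixP => i j; rewrite !mxE; case: (i == j); rewrite ?ev1_1 ?ev1_0.
by rewrite !big_ord_recr /= -IH -!mulmxE ev1_mxM.
Qed.

Lemma homz0 (Dn : nat) : homz Dn 0 = 0.
Proof. by rewrite /homz size_poly0 big_ord0. Qed.

Lemma gen4 (F : comNzRingType) (x y z w : F) : x * (y * z) * w = x * y * (w * z).
Proof. ring. Qed.

Lemma riley_f m n Phi : odd m -> is_riley_poly m n Phi ->
  lead_coef (riley_at2 Phi) ^+ 2 = 1 /\ (riley_at2 Phi)`_0 = 1.
Proof.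
move=> om [l Hl]; have m0 : (0 < m)%N by move: om; case: (m).
set Dd := (\max_(i < size Phi) size (Phi`_i)%R)%N.
have hD j : (size (Phi`_j)%R <= Dd.+1)%N.
  case: (ltnP j (size Phi)) => hj.
    apply: leq_trans (leqnSn _); rewrite /Dd.
    by rewrite (bigD1 (Ordinal hj)) //= leq_maxl.
  by rewrite nth_default // size_poly0.
set H := map_poly (homz Dd) Phi.
have TH : T H = LF_t ^+ Dd * eval2 Phi (LF_t + LF_t^-1) LF_u.
  rewrite T_horner /eval2 (@horner_coef_wide _ (size Phi)); last first.
    exact: leq_trans (size_poly _ _) (size_poly _ _).
  rewrite (@horner_coef_wide _ (size Phi)); last exact: size_poly.
  rewrite mulr_sumr; apply: eq_bigr => i _.
  rewrite [(map_poly jota H)`_i]coef_map_id0 ?jota0 // /H [(map_poly (homz Dd) Phi)`_i]coef_map_id0; last exact: homz0.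
  rewrite coef_map_id0; last by rewrite map_poly0 horner0.
  by rewrite homz_eval // mulrA.
have Eq : T H * LF_t ^+ m = LF_t ^ (Dd%:Z + l) * T (Nr m n).
  rewrite TH Hl -riley_phi_eq // exprzDr ?unitfE ?LF_t_neq0 //.
  exact: gen4.
have E1 := conclude Eq.
have E2 : ev1 H = riley_at2 Phi.
  apply/polyP => j; rewrite /ev1 /H /riley_at2.
  rewrite [(map_poly (horner_eval 1) _)`_j]coef_map_id0; last by rewrite horner_evalE horner0.
  rewrite [(map_poly (homz Dd) Phi)`_j]coef_map_id0; last exact: homz0.
  rewrite [(map_poly _ Phi)`_j]coef_map_id0; last by rewrite horner0.
  by rewrite horner_evalE homz_at1.
have E3 : ev1 (Nr m n) = (\prod_(i < m.-1) map_mx ev1 (Pm (riley_eps m n i.+1) (odd i.+1))) 0 0.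
  rewrite /Nr ev1D !ev1M ev1_tt ev1B ev1_1 ev1X ev1_tt expr1n subrr mul0r addr0 mul1r.
  have -> : ev1 (Wp m n 0 0) = map_mx ev1 (Wp m n) 0 0 by rewrite mxE.
  suff -> : map_mx ev1 (Wp m n) = \prod_(i < m.-1) map_mx ev1 (Pm (riley_eps m n i.+1) (odd i.+1)) by [].
  rewrite /Wp; elim: (m.-1) => [|N IH].
    by rewrite !big_ord0; apply/matrixP => i j; rewrite !mxE; case: (i == j); rewrite ?ev1_1 ?ev1_0.
  by rewrite !big_ord_recr /= -IH -!mulmxE ev1_mxM.
have := Inv_prod (Q_ok m n) m.-1.
rewrite -E3 -E1 E2 => [[_ h0]].
have -> : odd m.-1 = false by move: om; case: (m) => // m' /= /negbTE.
by case.
Qed.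

Lemma simple_root (k : fieldType) (f : {poly int}) (b : k) :
  lead_coef f ^+ 2 = 1 -> f`_0 = 1 -> (discr f)%:~R != (0 : k) ->
  root (map_poly intr f) b ->
  ((map_poly intr f)^`()).[b] != 0 /\ b != 0.
Proof.
move=> lf f0 hd hr.
have lf' : (lead_coef f == 1) || (lead_coef f == -1) by rewrite -sqrf_eq1 lf.
have l0 : lead_coef f != 0 by apply: contra_eq_neq lf => ->; rewrite expr0n.
have intr_l : (lead_coef f)%:~R != (0 : k).
  by case/orP: lf' => /eqP ->; rewrite ?rmorphN rmorph1 ?oppr_eq0 oner_neq0.
split; last first.
  apply: contraTneq hr => ->; rewrite /root horner_coef0 coef_map /= f0 rmorph1.
  exact: oner_neq0.
rewrite deriv_map.
have [hs|hs] := leqP (size f) 1.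
  move: hr; rewrite [f]size1_polyC // f0 map_polyC /= rmorph1 /root hornerC.
  by rewrite oner_eq0.
have [hs2|hs2] := leqP (size f) 2.
  have e2 : size f = 2 by apply/eqP; rewrite eqn_leq hs2 hs.
  have hd1 : (size f^`() <= 1)%N by rewrite /deriv; apply: leq_trans (size_poly _ _) _; rewrite e2.
  rewrite [f^`()]size1_polyC // map_polyC hornerC /= coef_deriv.
  by rewrite lead_coefE e2 /= mulr1n in intr_l.
have szd : (1 < size f^`())%N.
  rewrite ltnNge; apply/negP => hle.
  have : f^`()`_((size f).-2) = 0.
    by apply: nth_default; apply: leq_trans hle _; rewrite -ltnS prednK // -ltnS prednK // ltnW // ltnW.
  rewrite coef_deriv; apply/eqP; rewrite mulrn_eq0 negb_or andbC /=.
  rewrite prednK; last by rewrite -ltnS prednK // ltnW // ltnW.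
  by rewrite -lead_coefE l0.
have [[u v] /= _ Hres] := resultant_in_ideal hs szd.
have hRes : (resultant f f^`())%:~R != (0 : k).
  apply: contraNneq hd => hR.
  rewrite /discr; case/orP: lf' => /eqP ->; rewrite ?divzN divz1 !rmorphM ?rmorphN /= hR;
    by rewrite ?oppr0 mulr0.
apply: contraNneq hRes => hz.
have := congr1 (fun p => (map_poly (intr : int -> k) p).[b]) Hres.
rewrite /= map_polyC hornerC /= => ->.
rewrite rmorphD !rmorphM /= hornerD !hornerM hz mulr0 addr0.
by move: hr; rewrite /root => /eqP ->; rewrite mulr0.
Qed.

Section Inv.
Variable O : idomainType.
Variable u : pser O.
Hypothesis u0 : u 0%N \is a GRing.unit.

Definition EvI (b : pser O) : pser O := fun i => ps_mul u b i - ps_one O i.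

Lemma EvI_causal : causal EvI.
Proof.
move=> a b j H; rewrite /EvI /ps_mul; congr (_ - _); apply: eq_bigr => l _.
by rewrite H // leq_subr.
Qed.

Lemma EvI_step : stepP EvI (u 0%N)^-1 (u 0%N).
Proof.
move=> b n d n0 _; rewrite /EvI /ps_mul /upd !big_ord_recl /= !subn0 eqxx.
have -> : \sum_(i < n) u (bump 0 i) * (if (n - bump 0 i)%N == n then b n + d else b (n - bump 0 i)%N)
        = \sum_(i < n) u (bump 0 i) * b (n - bump 0 i)%N.
  apply: eq_bigr => i _; rewrite ifN //.
  by rewrite /bump /=; apply/eqP => h; move: n0 h; lia.
rewrite mulrDr; set S := \sum_(i < n) _.
rewrite -!addrA; congr (_ + _); rewrite addrC -!addrA; congr (_ + _).
by rewrite mulrC.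
Qed.

Lemma EvI_base : EvI (cst0 (u 0%N)^-1) 0%N = 0.
Proof.
by rewrite /EvI /ps_mul big_ord_recl big_ord0 /cst0 /ps_one /= mulrV // addr0 subrr.
Qed.

Lemma ps_unit_of : ps_unit u.
Proof.
have [b [_ Hb]] := hensel_exists EvI_causal EvI_step (mulVr u0) EvI_base.
exists b; apply: functional_extensionality_dep => i.
by apply/eqP; rewrite -subr_eq0; apply/eqP; exact: Hb.
Qed.
End Inv.

Unset Implicit Arguments.
Theorem corollary4p1p4 (m : nat) (n : int) (Phi : {poly {poly int}})
    (k : closedFieldType) (O : idomainType) (res : {rmorphism O -> k}) :
  schubert_params m n ->
  is_riley_poly m n Phi ->
  (discr (riley_at2 Phi))%:~R != (0 : k) ->
  complete_dvr_residue res ->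
  forall beta : k, root (map_poly intr (riley_at2 Phi)) beta ->
  exists! u : pser O,
    [/\ ps_unit u, res (u 0%N) = beta & ps_eval_riley Phi u = ps_zero O].
Proof.
move=> [om _ _ _ _] HR Hdisc [p0 [Hu Hc Hsurj Hker]] beta Hroot.
set f := riley_at2 Phi.
have [lf f0] := riley_f om HR.
have [hd b0] := simple_root lf f0 Hdisc Hroot.
set fO : {poly O} := map_poly intr f.
have resf : map_poly res fO = map_poly intr f.
  rewrite /fO -map_poly_comp; apply: eq_map_poly => x /=; exact: rmorph_int.
have resE (x : O) : res fO.[x] = (map_poly intr f).[res x].
  by rewrite -horner_map resf.
have resD (x : O) : res fO^`().[x] = (map_poly intr f)^`().[res x].
  by rewrite -horner_map -deriv_map resf.
have [x0 hx0] := Hsurj beta.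
have [a0 [ha0 ra0]] : exists a, fO.[a] = 0 /\ res a = res x0.
  apply: (hensel_O Hu Hker Hc).
    by rewrite resE hx0; apply/eqP.
  by rewrite resD hx0.
rewrite hx0 in ra0.
set c := fO^`().[a0].
have rc : res c != 0 by rewrite /c resD ra0.
have cu : c \is a GRing.unit := res_unit Hu Hker rc.
have c0 : c != 0 by apply: contraNneq rc => ->; rewrite rmorph0.
have [u [u0 Hu0]] := hensel_exists (@ev_causal O Phi) (@ev_step O Phi a0) (mulVr cu)
  (etrans (ev_base Phi a0) ha0).
exists u; split.
  split.
  - apply: ps_unit_of; rewrite u0; apply: (res_unit Hu Hker); by rewrite ra0.
  - by rewrite u0.
  - by apply: functional_extensionality_dep => i; rewrite Hu0.
move=> v [_ rv Ev].
have Ev0 i : ps_eval_riley Phi v i = 0 by rewrite Ev.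
have v0 : v 0%N = a0.
  have hv : fO.[v 0%N] = 0 by rewrite -ev_zero Ev0.
  set h := v 0%N - a0.
  have [r hr] := taylor1 fO a0 h.
  rewrite /h addrC subrK hv ha0 add0r -/c in hr.
  have : h * (c + h * r) = 0 by rewrite mulrDr mulrA -expr2 -hr.
  move/eqP; rewrite mulf_eq0 => /orP[|].
    by rewrite /h subr_eq0 => /eqP.
  have rh : res h = 0 by rewrite /h rmorphB rv ra0 subrr.
  move=> /eqP /(congr1 res); rewrite rmorphD rmorphM rh mul0r addr0 rmorph0.
  by move=> /eqP; rewrite (negPf rc).
exact: (hensel_unique (@ev_causal O Phi) (@ev_step O Phi a0) c0 u0 v0 Hu0 Ev0).
Qed.
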